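(* Let $V$ be real-valued and absolutely continuous on $[0,\pi]$ and let $a\in(0,\pi)$. There is a constant $C>0$ (depending on $V$ and $a$) such that for all $z\in\mathbb C$ and $n\in\mathbb N$, $$\left|\int_0^\pi F(x,z)\,\mathcal R_{a\pi}(x)\cos(nx)\,dx\right|\le C\frac{e^{\pi|\operatorname{Im}\sqrt z|}}{n^2}\left(1+\frac{1+|z|}{1+\pi|z|^{1/2}}\right).$$
   Context: $\sqrt{\cdot}$ is the principal branch. $\xi(x,z)$ is the solution of $-\xi''+V\xi=z\xi$, $\xi(0,z)=1$, $\xi'(0,z)=0$, and $F(x,z):=\xi(x,z)-\cos(\sqrt z\,x)$. $\mathcal R_{a\pi}(x)=1$ for $x\in[0,a]$ and $\frac{\pi-x}{\pi-a}$ for $x\in(a,\pi]$. *)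

(* Defs.v *)
(* classical reals. Complex numbers are encoded as pairs of reals. *)
From Stdlib Require Import Reals Lra List.
Open Scope R_scope.

(* Absolute continuity of V on [lo,hi]: for every eps>0 there is delta>0 such
   that for any finite family of non-overlapping subintervals (c_i,d_i) of
   [lo,hi] (listed in increasing order) with total length < delta, the total
   variation sum |V d_i - V c_i| is < eps. *)
Fixpoint ordered_in (lo hi : R) (l : list (R * R)) : Prop :=
  match l with
  | nil => True
  | (c, d) :: t => lo <= c /\ c <= d /\ d <= hi /\ ordered_in d hi t
  end.

Definition total_length (l : list (R * R)) : R :=
  fold_right (fun cd s => (snd cd - fst cd) + s) 0 l.

Definition total_var (V : R -> R) (l : list (R * R)) : R :=
  fold_right (fun cd s => Rabs (V (snd cd) - V (fst cd)) + s) 0 l.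

Definition abs_continuous_on (V : R -> R) (lo hi : R) : Prop :=
  forall eps, 0 < eps -> exists delta, 0 < delta /\
    forall l, ordered_in lo hi l -> total_length l < delta ->
      total_var V l < eps.

Definition cont_on (f : R -> R) (lo hi : R) : Prop :=
  forall x, lo <= x <= hi ->
    limit1_in f (fun y => lo <= y <= hi) (f x) x.

Definition cmod (p q : R) : R := sqrt (p ^ 2 + q ^ 2).

(* principal square root of z = p + i q : real and imaginary parts
   (branch cut on the negative real axis, Re >= 0, and Im > 0 on the cut) *)
Definition csqrt_re (p q : R) : R := sqrt ((cmod p q + p) / 2).
Definition csqrt_im (p q : R) : R :=
  if Rlt_dec q 0 then - sqrt ((cmod p q - p) / 2)
  else sqrt ((cmod p q - p) / 2).

(* cos(w x) for complex w = al + i be : real and imaginary parts *)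
Definition ccos_re (al be x : R) : R := cos (al * x) * cosh (be * x).
Definition ccos_im (al be x : R) : R := - (sin (al * x) * sinh (be * x)).

Definition Rapi (a x : R) : R :=
  if Rle_dec x a then 1 else (PI - x) / (PI - a).

(* Main.v *)
Require Import Defs.
From Stdlib Require Import Reals Lra List Psatz ZArith Lia.
From Coquelicot Require Import Coquelicot.
Open Scope R_scope.

Lemma csqrt_props p q :
  csqrt_re p q * csqrt_re p q - csqrt_im p q * csqrt_im p q = p /\
  2 * csqrt_re p q * csqrt_im p q = q /\
  csqrt_re p q * csqrt_re p q + csqrt_im p q * csqrt_im p q = cmod p q /\
  0 <= cmod p q.
Proof.
  unfold csqrt_re, csqrt_im, cmod.
  set (r := sqrt (p ^ 2 + q ^ 2)).
  assert (Hr2 : r * r = p ^ 2 + q ^ 2) by (apply sqrt_sqrt; nra).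
  assert (Hr0 : 0 <= r) by apply sqrt_pos.
  assert (Hp1 : 0 <= (r + p) / 2) by nra.
  assert (Hp2 : 0 <= (r - p) / 2) by nra.
  assert (E1 := sqrt_sqrt _ Hp1). assert (E2 := sqrt_sqrt _ Hp2).
  pose proof (sqrt_pos ((r + p) / 2)) as P1. pose proof (sqrt_pos ((r - p) / 2)) as P2.
  set (A := sqrt ((r + p) / 2)) in *. set (Bb := sqrt ((r - p) / 2)) in *.
  assert (HAB : (A * Bb) * (A * Bb) = q * q / 4).
  { replace ((A * Bb) * (A * Bb)) with ((A*A)*(Bb*Bb)) by ring. rewrite E1, E2. nra. }
  destruct (Rlt_dec q 0).
  - repeat split; try nra.
    assert (0 <= A * Bb) by nra. nra.
  - repeat split; try nra.
    assert (0 <= A * Bb) by nra. nra.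
Qed.

Definition cl (x:R) := Rmax 0 (Rmin PI x).
Lemma cl_in x : 0 <= cl x <= PI.
Proof. unfold cl, Rmax, Rmin. assert (H:=PI_RGT_0). repeat destruct Rle_dec; lra. Qed.
Lemma cl_id x : 0<=x<=PI -> cl x = x.
Proof. unfold cl, Rmax, Rmin. intros. repeat destruct Rle_dec; lra. Qed.
Lemma cl_lip x y : Rabs (cl x - cl y) <= Rabs (x - y).
Proof. unfold cl, Rmax, Rmin. assert (H:=PI_RGT_0). repeat destruct Rle_dec; unfold Rabs; repeat destruct Rcase_abs; lra. Qed.

Lemma cont_cl f : cont_on f 0 PI -> forall x, continuity_pt (fun y => f (cl y)) x.
Proof.
  intros Hf x. unfold continuity_pt, continue_in, limit1_in, limit_in.
  intros eps Heps. destruct (Hf (cl x) (cl_in x) eps Heps) as [alp [Halp H]].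
  exists alp. split; auto. intros y [_ Hy]. simpl in *. unfold R_dist in *.
  destruct (Req_dec (cl y) (cl x)) as [E|E].
  - rewrite E. rewrite Rminus_diag, Rabs_R0. lra.
  - apply H. split. apply cl_in. assert (Hl := cl_lip y x). lra.
Qed.

Lemma mvt_abs f d a b M : a <= b -> (forall x, a<=x<=b -> continuity_pt f x) ->
  (forall x, a<x<b -> derivable_pt_lim f x (d x)) ->
  (forall x, a<=x<=b -> Rabs (d x) <= M) -> Rabs (f b - f a) <= M*(b-a).
Proof.
  intros Hab Hc Hd HM.
  destruct (MVT_gen f a b d) as [c [Hc1 Hc2]].
  - rewrite Rmin_left, Rmax_right by lra. intros; apply is_derive_Reals; auto.
  - rewrite Rmin_left, Rmax_right by lra. auto.
  - rewrite Rmin_left, Rmax_right in Hc1 by lra. rewrite Hc2, Rabs_mult, (Rabs_right (b-a)) by lra.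
    apply Rmult_le_compat_r. lra. auto.
Qed.

Lemma mvt_mono f d a b : a <= b -> (forall x, a<=x<=b -> continuity_pt f x) ->
  (forall x, a<x<b -> derivable_pt_lim f x (d x)) ->
  (forall x, a<=x<=b -> d x <= 0) -> f b <= f a.
Proof.
  intros Hab Hc Hd HM.
  destruct (MVT_gen f a b d) as [c [Hc1 Hc2]].
  - rewrite Rmin_left, Rmax_right by lra. intros; apply is_derive_Reals; auto.
  - rewrite Rmin_left, Rmax_right by lra. auto.
  - rewrite Rmin_left, Rmax_right in Hc1 by lra. assert (d c <= 0) by auto. nra.
Qed.

Lemma ac_bounded V : abs_continuous_on V 0 PI -> exists B, 0 < B /\ forall x, 0<=x<=PI -> Rabs (V x) <= B.
Proof.
  intros HV. destruct (HV 1 Rlt_0_1) as [dl [Hdl Hl]].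
  assert (Hstep : forall x y, 0 <= x <= y -> y <= PI -> y - x < dl -> Rabs (V y - V x) <= 1).
  { intros x y Hxy HyP Hd. assert (H := Hl ((x,y)::nil)). simpl in H.
    assert (H' : Rabs (V y - V x) + 0 < 1). apply H. repeat split; lra. lra. lra. }
  assert (Hind : forall k:nat, forall x, 0 <= x <= PI -> x <= INR k * dl / 2 -> Rabs (V x - V 0) <= INR k).
  { induction k as [|k IH]; intros x Hx Hk.
    - simpl in *. assert (x = 0) by lra. subst. rewrite Rminus_diag, Rabs_R0. lra.
    - rewrite S_INR in *. set (y := Rmax 0 (x - dl/2)).
      assert (Hy : 0 <= y <= x /\ x - y <= dl/2 /\ y <= INR k * dl / 2).
      { unfold y, Rmax. assert (0 <= INR k) by apply pos_INR. destruct Rle_dec; nra. }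
      assert (H1 := IH y ltac:(lra) ltac:(lra)).
      assert (H2 := Hstep y x ltac:(lra) ltac:(lra) ltac:(lra)).
      replace (V x - V 0) with ((V x - V y) + (V y - V 0)) by ring.
      eapply Rle_trans. apply Rabs_triang. lra. }
  destruct (archimed (2 * PI / dl)) as [Hu _].
  assert (Hpos : (0 < up (2*PI/dl))%Z).
  { apply lt_IZR. assert (0 < 2*PI/dl). { apply Rdiv_lt_0_compat; assert (H:=PI_RGT_0); lra. } lra. }
  set (k := Z.to_nat (up (2 * PI / dl))).
  assert (Hk : PI <= INR k * dl / 2).
  { unfold k. rewrite INR_IZR_INZ, Z2Nat.id by lia.
    assert (2*PI/dl * dl = 2*PI) by (field; lra). nra. }
  exists (1 + Rabs (V 0) + INR k). split.
  - assert (0 <= INR k) by apply pos_INR. assert (0 <= Rabs (V 0)) by apply Rabs_pos. lra.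
  - intros x Hx. assert (H := Hind k x Hx ltac:(lra)).
    replace (V x) with ((V x - V 0) + V 0) by ring.
    eapply Rle_trans. apply Rabs_triang. lra.
Qed.

Definition Crd (al be x : R) := - (al * sin (al*x) * cosh (be*x)) + be * cos (al*x) * sinh (be*x).
Definition Cid (al be x : R) := - (al * cos (al*x) * sinh (be*x) + be * sin (al*x) * cosh (be*x)).

Lemma d_Cr al be x : derivable_pt_lim (ccos_re al be) x (Crd al be x).
Proof.
  apply is_derive_Reals. unfold ccos_re, Crd, cosh, sinh. auto_derive; auto. field.
Qed.
Lemma d_Ci al be x : derivable_pt_lim (ccos_im al be) x (Cid al be x).
Proof.
  apply is_derive_Reals. unfold ccos_im, Cid, cosh, sinh. auto_derive; auto. field.
Qed.
Lemma d_Crd al be p q x : al*al - be*be = p -> 2*al*be = q ->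
  derivable_pt_lim (Crd al be) x (-(p * ccos_re al be x - q * ccos_im al be x)).
Proof.
  intros H1 H2. subst. apply is_derive_Reals. unfold ccos_re, ccos_im, Crd, cosh, sinh. auto_derive; auto. field.
Qed.
Lemma d_Cid al be p q x : al*al - be*be = p -> 2*al*be = q ->
  derivable_pt_lim (Cid al be) x (-(p * ccos_im al be x + q * ccos_re al be x)).
Proof.
  intros H1 H2. subst. apply is_derive_Reals. unfold ccos_re, ccos_im, Cid, cosh, sinh. auto_derive; auto. field.
Qed.
Lemma Cr0 al be : ccos_re al be 0 = 1.
Proof. unfold ccos_re, cosh. rewrite !Rmult_0_r, cos_0, Ropp_0, exp_0. field. Qed.
Lemma Ci0 al be : ccos_im al be 0 = 0.
Proof. unfold ccos_im. rewrite !Rmult_0_r, sin_0. ring. Qed.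
Lemma Crd0 al be : Crd al be 0 = 0.
Proof. unfold Crd, sinh. rewrite !Rmult_0_r, sin_0, Ropp_0, exp_0. field. Qed.
Lemma Cid0 al be : Cid al be 0 = 0.
Proof. unfold Cid, sinh. rewrite !Rmult_0_r, sin_0, Ropp_0, exp_0. field. Qed.

Lemma dpl_ext f g x l l' : (forall y, f y = g y) -> l = l' -> derivable_pt_lim f x l -> derivable_pt_lim g x l'.
Proof.
  intros Hfg Hl H. subst l'. intros eps Heps. destruct (H eps Heps) as [d Hd].
  exists d. intros h Hh Hhd. rewrite <- !Hfg. auto.
Qed.

Definition En (m : R) (U W U1 W1 : R -> R) (x : R) :=
  U1 x * U1 x + W1 x * W1 x + m * (U x * U x + W x * W x).

Lemma En_deriv m U W U1 W1 x a1 a2 :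
  derivable_pt_lim U x (U1 x) -> derivable_pt_lim W x (W1 x) ->
  derivable_pt_lim U1 x a1 -> derivable_pt_lim W1 x a2 ->
  derivable_pt_lim (En m U W U1 W1) x
    (2*U1 x*a1 + 2*W1 x*a2 + m*(2*U x*U1 x + 2*W x*W1 x)).
Proof.
  intros HU HW HU1 HW1.
  assert (H := derivable_pt_lim_plus _ _ _ _ _
     (derivable_pt_lim_plus _ _ _ _ _ (derivable_pt_lim_mult _ _ _ _ _ HU1 HU1) (derivable_pt_lim_mult _ _ _ _ _ HW1 HW1))
     (derivable_pt_lim_scal _ m _ _ (derivable_pt_lim_plus _ _ _ _ _ (derivable_pt_lim_mult _ _ _ _ _ HU HU) (derivable_pt_lim_mult _ _ _ _ _ HW HW)))).
  eapply dpl_ext; [| | exact H]. intros y. unfold En, plus_fct, mult_fct, mult_real_fct. ring.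
  unfold plus_fct, mult_fct, mult_real_fct. ring.
Qed.

Lemma En_cont m U W U1 W1 x :
  continuity_pt U x -> continuity_pt W x -> continuity_pt U1 x -> continuity_pt W1 x ->
  continuity_pt (En m U W U1 W1) x.
Proof.
  intros. unfold En.
  apply (continuity_pt_plus (fun y => U1 y * U1 y + W1 y * W1 y) (fun y => m * (U y * U y + W y * W y))).
  apply (continuity_pt_plus (fun y => U1 y * U1 y) (fun y => W1 y * W1 y)); apply continuity_pt_mult; auto.
  apply (continuity_pt_scal (fun y => (U y * U y + W y * W y))).
  apply (continuity_pt_plus (fun y => U y * U y) (fun y => W y * W y)); apply continuity_pt_mult; auto.
Qed.

Lemma gronwall E dE k b X : 0<=X -> (forall x, 0<=x<=X -> continuity_pt E x) ->
  (forall x, 0<x<X -> derivable_pt_lim E x (dE x)) ->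
  (forall x, 0<=x<=X -> dE x <= k * E x + b * exp (k*x)) ->
  E X <= (E 0 + b*X) * exp (k*X).
Proof.
  intros HX Hc Hd Hb.
  set (f := fun x => exp (-k*x) * E x - b * x).
  assert (Hm : f X <= f 0).
  { apply (mvt_mono f (fun x => (- k * exp (-k*x)) * E x + exp (-k*x) * dE x - b) 0 X HX).
    - intros x Hx. unfold f.
      apply (continuity_pt_minus (fun x => exp (-k*x) * E x) (fun x => b*x)).
      apply (continuity_pt_mult (fun x => exp (-k*x)) E); auto.
      apply derivable_continuous_pt. apply derivable_pt_comp. apply derivable_pt_scal, derivable_pt_id.
      apply derivable_pt_exp.
      apply (continuity_pt_scal id). apply derivable_continuous_pt, derivable_pt_id.
    - intros x Hx. unfold f.
      assert (He : derivable_pt_lim (fun x => exp (-k*x)) x (- k * exp (-k*x))).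
      { apply is_derive_Reals. auto_derive; auto. ring. }
      assert (H := derivable_pt_lim_minus _ _ _ _ _ (derivable_pt_lim_mult _ _ _ _ _ He (Hd x Hx))
          (derivable_pt_lim_scal id b x 1 (derivable_pt_lim_id x))).
      eapply dpl_ext; [| | exact H]. intros; unfold minus_fct, mult_fct, mult_real_fct, id; ring.
      cbv beta; ring.
    - intros x Hx. assert (H := Hb x Hx).
      assert (Hp : 0 < exp (-k*x)) by apply exp_pos.
      assert (Hex : exp (-k*x) * exp (k*x) = 1). { rewrite <- exp_plus. replace (-k*x+k*x) with 0 by ring. apply exp_0. }
      assert (H2 : exp (-k*x) * dE x <= exp (-k*x) * (k * E x + b * exp (k*x))) by (apply Rmult_le_compat_l; lra).
      replace (exp (-k*x) * (k * E x + b * exp (k*x))) with (k * exp (-k*x) * E x + b * (exp (-k*x) * exp (k*x))) in H2 by ring.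
      rewrite Hex in H2. lra. }
  unfold f in Hm. rewrite Rmult_0_r, exp_0 in Hm.
  assert (Hex : exp (-k*X) * exp (k*X) = 1). { rewrite <- exp_plus. replace (-k*X+k*X) with 0 by ring. apply exp_0. }
  assert (0 < exp (k*X)) by apply exp_pos.
  replace (E X) with ((exp (-k*X) * E X) * exp (k*X)) by (transitivity (E X * (exp (-k*X) * exp (k*X))); [ring| rewrite Hex; ring]).
  apply Rmult_le_compat_r; lra.
Qed.

Lemma key_ineq A q m c X1 X2 Y1 Y2 : 0 < m -> 0 <= c -> A*A + q*q <= c*c*m ->
  2*(A*(X1*Y1+X2*Y2) + q*(Y1*X2 - Y2*X1)) <= c*(m*(X1*X1+X2*X2) + (Y1*Y1+Y2*Y2)).
Proof.
  intros Hm Hc H.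
  set (S := A*(X1*Y1+X2*Y2) + q*(Y1*X2 - Y2*X1)).
  set (X := X1*X1+X2*X2). set (Y := Y1*Y1+Y2*Y2).
  assert (HS : S*S <= (A*A+q*q)*X*Y).
  { unfold S, X, Y. assert (0 <= (A*(Y1*X2 - Y2*X1) - q*(X1*Y1+X2*Y2))^2) by apply pow2_ge_0.
    assert (E : (X1*X1+X2*X2)*(Y1*Y1+Y2*Y2) = (X1*Y1+X2*Y2)^2 + (Y1*X2 - Y2*X1)^2) by ring.
    replace ((A*A+q*q)*(X1*X1+X2*X2)*(Y1*Y1+Y2*Y2)) with ((A*A+q*q)*((X1*Y1+X2*Y2)^2 + (Y1*X2 - Y2*X1)^2)) by (rewrite <- E; ring).
    nra. }
  assert (HX : 0 <= X) by (unfold X; nra). assert (HY : 0 <= Y) by (unfold Y; nra).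
  assert (H2 : 4*(S*S) <= (c*(m*X+Y))*(c*(m*X+Y))).
  { assert (HXY : 0 <= X*Y) by nra.
    assert (H3 : (A*A+q*q)*(X*Y) <= (c*c*m)*(X*Y)) by (apply Rmult_le_compat_r; lra).
    assert (H4 : 4*(m*X*Y) <= (m*X+Y)*(m*X+Y)) by (assert (0 <= (m*X-Y)^2) by apply pow2_ge_0; nra).
    assert (H5 : (c*c)*(4*(m*X*Y)) <= (c*c)*((m*X+Y)*(m*X+Y))) by (apply Rmult_le_compat_l; nra).
    nra. }
  assert (HT : 0 <= c*(m*X+Y)) by (apply Rmult_le_pos; nra).
  fold S. apply Rnot_lt_le. intro Hc'.
  assert (HH : 0 < (2*S - c*(m*X+Y)) * (2*S + c*(m*X+Y))) by (apply Rmult_lt_0_compat; lra).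
  nra.
Qed.

Lemma mz_ineq p q : let al := csqrt_re p q in let be := csqrt_im p q in
  (1 + cmod p q - p)*(1 + cmod p q - p) + q*q <= (1+2*Rabs be)*(1+2*Rabs be)*(1+cmod p q).
Proof.
  intros al be. destruct (csqrt_props p q) as [H1 [H2 [H3 H4]]]. fold al be in H1, H2, H3.
  rewrite <- H3, <- H1, <- H2.
  assert (Hb : Rabs be * Rabs be = be * be) by (rewrite <- Rabs_mult; apply Rabs_right; nra).
  assert (0 <= Rabs be) by apply Rabs_pos.
  set (t := Rabs be) in *.
  replace ((1 + (al * al + be * be) - (al * al - be * be)) * (1 + (al * al + be * be) - (al * al - be * be)) + 2 * al * be * (2 * al * be))
    with ((1 + 2*(t*t))*(1 + 2*(t*t)) + 4*(al*al)*(t*t)) by (rewrite Hb; ring).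
  replace ((1 + 2 * t) * (1 + 2 * t) * (1 + (al * al + be * be))) with ((1 + 2 * t) * (1 + 2 * t) * (1 + (al * al + t*t))) by (rewrite Hb; ring).
  assert (0 <= al*al) by nra. assert (0 <= t*(1+al*al+t*t)) by (apply Rmult_le_pos; nra).
  replace ((1 + 2 * t) * (1 + 2 * t) * (1 + (al * al + t*t))) with
    ((1 + 2*(t*t))*(1 + 2*(t*t)) + 4*(al*al)*(t*t) + (al*al + t*t + 4*(t*(1+al*al+t*t)))) by ring.
  nra.
Qed.

Lemma lem2 a v b B : Rabs v <= B -> 2*(a*v*b) <= B*(a*a+b*b).
Proof.
  intros H. assert (Hab : 2*Rabs a*Rabs b <= a*a+b*b).
  { assert (0 <= (Rabs a - Rabs b)^2) by apply pow2_ge_0.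
    assert (Rabs a * Rabs a = a*a) by (rewrite <- Rabs_mult; apply Rabs_right; nra).
    assert (Rabs b * Rabs b = b*b) by (rewrite <- Rabs_mult; apply Rabs_right; nra). nra. }
  assert (H1 : a*v*b <= Rabs a * Rabs v * Rabs b) by (rewrite <- !Rabs_mult; apply Rle_abs).
  assert (0 <= Rabs a) by apply Rabs_pos. assert (0 <= Rabs b) by apply Rabs_pos.
  assert (Rabs a * Rabs v * Rabs b <= Rabs a * B * Rabs b).
  { apply Rmult_le_compat_r; auto. apply Rmult_le_compat_l; auto. }
  assert (0 <= B) by (assert (0 <= Rabs v) by apply Rabs_pos; lra).
  assert (B*(2 * Rabs a * Rabs b) <= B*(a * a + b * b)) by (apply Rmult_le_compat_l; lra).
  nra.
Qed.

Lemma sys_bound (U W U1 W1 s1 s2 : R -> R) p q B b :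
  let m := 1 + cmod p q in
  let k := 1 + 2 * Rabs (csqrt_im p q) + B in
  (forall x, continuity_pt U x) -> (forall x, continuity_pt W x) ->
  (forall x, continuity_pt U1 x) -> (forall x, continuity_pt W1 x) ->
  (forall x, 0 < x < PI ->
     derivable_pt_lim U x (U1 x) /\ derivable_pt_lim W x (W1 x) /\
     derivable_pt_lim U1 x (s1 x - (p * U x - q * W x)) /\
     derivable_pt_lim W1 x (s2 x - (p * W x + q * U x))) ->
  (forall x, 0 <= x <= PI -> 2*(U1 x * s1 x + W1 x * s2 x) <= B * En m U W U1 W1 x + b * exp (k*x)) ->
  forall X, 0 <= X <= PI -> En m U W U1 W1 X <= (En m U W U1 W1 0 + b * X) * exp (k*X).
Proof.
  intros m k HU HW HU1 HW1 Hd Hs X HX.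
  destruct (csqrt_props p q) as [_ [_ [_ Hr]]].
  assert (Hmz := mz_ineq p q). simpl in Hmz.
  apply (gronwall _ (fun x => 2*U1 x*(s1 x - (p * U x - q * W x)) + 2*W1 x*(s2 x - (p * W x + q * U x))
       + m*(2*U x*U1 x + 2*W x*W1 x))); try lra.
  - intros. apply En_cont; auto.
  - intros x Hx. destruct (Hd x ltac:(lra)) as [H1 [H2 [H3 H4]]]. apply En_deriv; auto.
  - intros x Hx. assert (H := Hs x ltac:(lra)).
    assert (Hk := key_ineq (m - p) q m (1 + 2 * Rabs (csqrt_im p q)) (U x) (W x) (U1 x) (W1 x)).
    assert (0 <= Rabs (csqrt_im p q)) by apply Rabs_pos.
    assert (Hk' := Hk ltac:(unfold m; lra) ltac:(lra) ltac:(unfold m; lra)).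
    unfold En in *.
    match goal with |- ?L <= _ => replace L with (2*(U1 x * s1 x + W1 x * s2 x) + 2 * ((m - p) * (U x * U1 x + W x * W1 x) + q * (U1 x * W x - W1 x * U x))) by ring end.
    replace (k * (U1 x * U1 x + W1 x * W1 x + m * (U x * U x + W x * W x))) with
      (B * (U1 x * U1 x + W1 x * W1 x + m * (U x * U x + W x * W x)) + (1 + 2 * Rabs (csqrt_im p q)) * (m * (U x * U x + W x * W x) + (U1 x * U1 x + W1 x * W1 x))) by (unfold k; ring).
    lra.
Qed.

Lemma cpid x : continuity_pt (fun y => y) x. Proof. apply derivable_continuous_pt, derivable_pt_id. Qed.
Lemma cpconst c x : continuity_pt (fun _ => c) x. Proof. apply derivable_continuous_pt, derivable_pt_const. Qed.
Ltac cont := repeat first [ apply continuity_pt_plus | apply continuity_pt_minus | apply continuity_pt_mult | apply continuity_pt_opp | apply cpconst | apply cpid | (apply (continuity_pt_comp _ sin); [| apply continuity_sin]) | (apply (continuity_pt_comp _ cos); [| apply continuity_cos])  | assumption | match goal with H : forall x, continuity_pt ?f x |- continuity_pt ?f _ => apply H end ].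

Lemma Rapi_alt a x : 0 < a < PI -> Rapi a x = 1 - Rmax 0 (x - a) / (PI - a).
Proof.
  intros Ha. unfold Rapi, Rmax. destruct Rle_dec; destruct Rle_dec; try lra; try (field; lra).
  replace (x - a) with 0 by lra. unfold Rdiv. ring.
Qed.

Lemma Rapi_cont a x : 0 < a < PI -> continuity_pt (Rapi a) x.
Proof.
  intros Ha. unfold continuity_pt, continue_in, limit1_in, limit_in. intros eps Heps.
  exists (eps * (PI - a)). split. apply Rmult_lt_0_compat; lra.
  intros y [_ Hy]. simpl in *. unfold R_dist in *. rewrite !Rapi_alt by auto.
  replace (1 - Rmax 0 (y - a) / (PI - a) - (1 - Rmax 0 (x - a) / (PI - a))) with
    ((Rmax 0 (x - a) - Rmax 0 (y - a)) / (PI - a)) by (field; lra).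
  unfold Rdiv. rewrite Rabs_mult, (Rabs_right (/ (PI - a))) by (apply Rle_ge, Rlt_le, Rinv_0_lt_compat; lra).
  apply (Rmult_lt_reg_r (PI - a)). lra. rewrite Rmult_assoc, Rinv_l by lra.
  assert (Rabs (Rmax 0 (x - a) - Rmax 0 (y - a)) <= Rabs (y - x)).
  { unfold Rmax. repeat destruct Rle_dec; unfold Rabs; repeat destruct Rcase_abs; lra. }
  lra.
Qed.

Ltac derf := auto_derive; [ repeat split; eexists; eassumption | ].

Lemma abs_cos_le x : Rabs (cos x) <= 1.
Proof. apply Rabs_le. apply COS_bound. Qed.
Lemma abs_sin_le x : Rabs (sin x) <= 1.
Proof. apply Rabs_le. apply SIN_bound. Qed.

Ltac rdv := repeat match goal with |- context [Derive (fun y => ?F y) ?x] =>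
  match goal with H : is_derive F x ?l |- _ =>
   replace (Derive (fun y => F y) x) with l by (symmetry; apply is_derive_unique; exact H) end end.

Lemma ibp_bound (f f1 f2 : R->R) a N M1 M2 :
 0<a<PI -> 1 <= N ->
 (forall x, continuity_pt f x) -> (forall x, continuity_pt f1 x) ->
 (forall x, 0<x<PI -> derivable_pt_lim f x (f1 x) /\ derivable_pt_lim f1 x (f2 x)) ->
 (forall x, 0<=x<=PI -> Rabs (f x) <= M1 /\ Rabs (f1 x) <= M1 /\ Rabs (f2 x) <= M2) ->
 f 0 = 0 -> f1 0 = 0 ->
 Rabs (RInt (fun x => f x * Rapi a x * cos (N*x)) 0 PI) <= (PI*(M2 + 2*M1/(PI-a)) + 2*M1/(PI-a)) / (N*N).
Proof.
  intros Ha HN Hfc Hf1c Hd Hb Hf0 Hf10.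
  assert (HPI := PI_RGT_0).
  set (g := fun x => f x * Rapi a x * cos (N*x)).
  assert (Hgc : forall x, continuity_pt g x).
  { intros x. unfold g. cont; apply Rapi_cont; auto. }
  set (P := RInt g 0).
  assert (HP : forall x, derivable_pt_lim P x (g x)).
  { intros x. apply is_derive_Reals. apply (is_derive_RInt g P 0 x).
    apply filter_forall. intros y. unfold P. apply (RInt_correct g 0 y), ex_RInt_continuous. intros; apply continuity_pt_filterlim, Hgc.
    apply continuity_pt_filterlim, Hgc. }
  assert (HPc : forall x, continuity_pt P x).
  { intros x. apply derivable_continuous_pt. exists (g x). apply HP. }
  assert (HP0 : P 0 = 0) by (unfold P; rewrite RInt_point; reflexivity).
  set (d := PI - a).
  assert (Hdp : 0 < d) by (unfold d; lra).
  set (h1 := fun x => f x * sin (N*x) / N + f1 x * cos (N*x) / (N*N)).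
  set (R2 := fun x => (PI - x) / d).
  set (h2 := fun x => f x * R2 x * sin (N*x) / N + (f1 x * R2 x - f x / d) * cos (N*x) / (N*N)).
  assert (HM2 : 0 <= M2) by (destruct (Hb 0 ltac:(lra)) as [_ [_ H]]; assert (H' := Rabs_pos (f2 0)); lra).
  assert (HM1 : 0 <= M1) by (destruct (Hb 0 ltac:(lra)) as [H _]; assert (H' := Rabs_pos (f 0)); lra).
  assert (HN2 : 0 < N*N) by nra.
  assert (S1 : Rabs ((P a - h1 a) - (P 0 - h1 0)) <= M2 / (N*N) * (a - 0)).
  { apply (mvt_abs (fun x => P x - h1 x) (fun x => - (f2 x * cos (N*x)) / (N*N))); try lra.
    - intros x Hx. unfold h1. unfold Rdiv. cont.
    - intros x Hx. destruct (Hd x ltac:(lra)) as [H1 H2].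
      apply is_derive_Reals in H1. apply is_derive_Reals in H2.
      assert (Hh : is_derive h1 x (f x * cos (N*x) + f2 x * cos (N*x) / (N*N))).
      { unfold h1. derf. rdv. field. lra. }
      apply is_derive_Reals in Hh.
      assert (H := derivable_pt_lim_minus _ _ _ _ _ (HP x) Hh).
      eapply dpl_ext; [ | | exact H]. reflexivity.
      unfold g. rewrite (Rapi_alt a x Ha), Rmax_left by lra. field. lra.
    - intros x Hx. destruct (Hb x ltac:(lra)) as [_ [_ H]].
      unfold Rdiv. rewrite Rabs_mult, Rabs_Ropp, Rabs_mult, (Rabs_right (/ (N*N))) by (apply Rle_ge, Rlt_le, Rinv_0_lt_compat; lra).
      apply Rmult_le_compat_r. apply Rlt_le, Rinv_0_lt_compat; lra.
      assert (Rabs (cos (N*x)) <= 1) by apply abs_cos_le.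
      assert (0 <= Rabs (f2 x)) by apply Rabs_pos. assert (0 <= Rabs (cos (N*x))) by apply Rabs_pos.
      nra. }
  assert (S2 : Rabs ((P PI - h2 PI) - (P a - h2 a)) <= (M2 + 2*M1/d) / (N*N) * (PI - a)).
  { apply (mvt_abs (fun x => P x - h2 x) (fun x => - ((f2 x * R2 x - 2 * f1 x / d) * cos (N*x)) / (N*N))); try lra.
    - intros x Hx. unfold h2, R2. unfold Rdiv. cont.
    - intros x Hx. destruct (Hd x ltac:(lra)) as [H1 H2].
      apply is_derive_Reals in H1. apply is_derive_Reals in H2.
      assert (Hh : is_derive h2 x (f x * R2 x * cos (N*x) + (f2 x * R2 x - 2 * f1 x / d) * cos (N*x) / (N*N))).
      { unfold h2, R2. derf. rdv. field. lra. }
      apply is_derive_Reals in Hh.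
      assert (H := derivable_pt_lim_minus _ _ _ _ _ (HP x) Hh).
      eapply dpl_ext; [ | | exact H]. reflexivity.
      unfold g, R2. rewrite (Rapi_alt a x Ha), Rmax_right by lra. unfold d. field. lra.
    - intros x Hx. destruct (Hb x ltac:(lra)) as [_ [H1 H]].
      assert (HR : 0 <= R2 x <= 1).
      { unfold R2. split. apply Rdiv_le_0_compat; lra. apply (Rmult_le_reg_r d); auto. unfold Rdiv. rewrite Rmult_assoc, Rinv_l; unfold d in *; lra. }
      assert (HG : Rabs (f2 x * R2 x - 2 * f1 x / d) <= M2 + 2*M1/d).
      { unfold Rminus. eapply Rle_trans. apply Rabs_triang. rewrite Rabs_Ropp, Rabs_mult, (Rabs_right (R2 x)) by lra.
        unfold Rdiv. rewrite Rabs_mult, Rabs_mult, (Rabs_right 2), (Rabs_right (/ d)) by (try apply Rle_ge, Rlt_le, Rinv_0_lt_compat; lra).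
        assert (0 <= Rabs (f2 x)) by apply Rabs_pos. assert (0 < / d) by (apply Rinv_0_lt_compat; lra).
        assert (0 <= Rabs (f2 x) * (1 - R2 x)) by (apply Rmult_le_pos; lra).
        assert (Rabs (f2 x) * R2 x <= M2) by lra.
        assert (2 * Rabs (f1 x) * / d <= 2 * M1 * / d) by (apply Rmult_le_compat_r; lra). lra. }
      unfold Rdiv. rewrite Rabs_mult, Rabs_Ropp, Rabs_mult, (Rabs_right (/ (N*N))) by (apply Rle_ge, Rlt_le, Rinv_0_lt_compat; lra).
      apply Rmult_le_compat_r. apply Rlt_le, Rinv_0_lt_compat; lra.
      assert (Rabs (cos (N*x)) <= 1) by apply abs_cos_le.
      eapply Rle_trans. apply Rmult_le_compat_l. apply Rabs_pos. eassumption.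
      rewrite Rmult_1_r. exact HG. }
  assert (E0 : h1 0 = 0) by (unfold h1; rewrite Hf0, Hf10; field; lra).
  assert (Ea : h1 a - h2 a = f a * cos (N*a) / (d * (N*N))) by (unfold h1, h2, R2, d; field; lra).
  assert (Epi : h2 PI = - (f PI * cos (N*PI)) / (d * (N*N))) by (unfold h2, R2, d; field; lra).
  change (RInt (fun x => f x * Rapi a x * cos (N*x)) 0 PI) with (P PI).
  replace (P PI) with (((P a - h1 a) - (P 0 - h1 0)) + ((P PI - h2 PI) - (P a - h2 a)) + (h1 a - h2 a) - h1 0 + h2 PI)
    by (rewrite HP0; ring).
  rewrite E0, Ea, Epi.
  assert (Fa : Rabs (f a * cos (N*a) / (d * (N*N))) <= M1 / (d * (N*N))).
  { unfold Rdiv. rewrite !Rabs_mult, (Rabs_right (/ (d*(N*N)))) by (apply Rle_ge, Rlt_le, Rinv_0_lt_compat; nra).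
    apply Rmult_le_compat_r. apply Rlt_le, Rinv_0_lt_compat; nra.
    destruct (Hb a ltac:(lra)) as [H _]. assert (Rabs (cos (N*a)) <= 1) by apply abs_cos_le.
    assert (0 <= Rabs (f a)) by apply Rabs_pos. assert (0 <= Rabs (cos (N*a))) by apply Rabs_pos. nra. }
  assert (Fpi : Rabs (- (f PI * cos (N*PI)) / (d * (N*N))) <= M1 / (d * (N*N))).
  { unfold Rdiv. rewrite !Rabs_mult, Rabs_Ropp, Rabs_mult, (Rabs_right (/ (d*(N*N)))) by (apply Rle_ge, Rlt_le, Rinv_0_lt_compat; nra).
    apply Rmult_le_compat_r. apply Rlt_le, Rinv_0_lt_compat; nra.
    destruct (Hb PI ltac:(lra)) as [H _]. assert (Rabs (cos (N*PI)) <= 1) by apply abs_cos_le.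
    assert (0 <= Rabs (f PI)) by apply Rabs_pos. assert (0 <= Rabs (cos (N*PI))) by apply Rabs_pos. nra. }
  rewrite E0 in S1. rewrite Epi in S2.
  set (A3 := f a * cos (N*a) / (d * (N*N))) in *.
  set (A4 := - (f PI * cos (N*PI)) / (d * (N*N))) in *.
  eapply Rle_trans. apply Rabs_triang. rewrite Rminus_0_r.
  eapply Rle_trans. apply Rplus_le_compat_r. apply Rabs_triang.
  eapply Rle_trans. apply Rplus_le_compat_r, Rplus_le_compat_r. apply Rabs_triang.
  assert (ET : (PI * (M2 + 2 * M1 / d) + 2 * M1 / d) / (N * N) =
   M2 / (N*N) * (a - 0) + (M2 + 2*M1/d) / (N*N) * (PI - a) + M1 / (d * (N*N)) + M1 / (d * (N*N))
     + 2 * a * M1 / (d * (N*N))).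
  { field. split; lra. }
  assert (0 <= 2 * a * M1 / (d * (N*N))).
  { apply Rdiv_le_0_compat. nra. nra. }
  lra.
Qed.

Lemma loc_deriv f g x l : 0<x<PI -> (forall y, 0<=y<=PI -> g y = f y) ->
  derivable_pt_lim g x l -> derivable_pt_lim f x l.
Proof.
  intros Hx Hfg H. apply is_derive_Reals. apply is_derive_Reals in H.
  apply (is_derive_ext_loc g f x l); auto.
  assert (He : 0 < Rmin x (PI - x)) by (apply Rmin_glb_lt; lra).
  exists (mkposreal _ He). intros y Hy. apply Hfg.
  unfold ball in Hy; simpl in Hy. unfold AbsRing_ball, abs, minus, plus, opp in Hy; simpl in Hy.
  assert (H1 := Rmin_l x (PI - x)). assert (H2 := Rmin_r x (PI - x)).
  unfold Rabs in Hy. destruct Rcase_abs in Hy; lra.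
Qed.

Lemma sq_le a b : 0 <= b -> a * a <= b * b -> Rabs a <= b.
Proof.
  intros Hb H. unfold Rabs. destruct Rcase_abs; nra.
Qed.

Theorem lemmaA6 (V : R -> R) (a : R)
  (HV : abs_continuous_on V 0 PI) (Ha : 0 < a < PI) :
  exists C : R, 0 < C /\
  forall (p q : R) (n : nat), (1 <= n)%nat ->
  forall (u w u' w' : R -> R),
    cont_on u 0 PI -> cont_on w 0 PI -> cont_on u' 0 PI -> cont_on w' 0 PI ->
    (forall x, 0 < x < PI ->
       derivable_pt_lim u x (u' x) /\ derivable_pt_lim w x (w' x) /\
       derivable_pt_lim u' x (V x * u x - (p * u x - q * w x)) /\
       derivable_pt_lim w' x (V x * w x - (p * w x + q * u x))) ->
    u 0 = 1 -> w 0 = 0 -> u' 0 = 0 -> w' 0 = 0 ->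
  forall (pr_re : Riemann_integrable
            (fun x => (u x - ccos_re (csqrt_re p q) (csqrt_im p q) x)
                      * Rapi a x * cos (INR n * x)) 0 PI)
         (pr_im : Riemann_integrable
            (fun x => (w x - ccos_im (csqrt_re p q) (csqrt_im p q) x)
                      * Rapi a x * cos (INR n * x)) 0 PI),
    sqrt (RiemannInt pr_re ^ 2 + RiemannInt pr_im ^ 2)
    <= C * exp (PI * Rabs (csqrt_im p q)) / (INR n ^ 2)
         * (1 + (1 + cmod p q) / (1 + PI * sqrt (cmod p q))).
Proof.
  destruct (ac_bounded V HV) as [B [HB HVb]].
  assert (HPI := PI_RGT_0). assert (HPI4 := PI_4).
  set (d := PI - a). assert (Hd : 0 < d) by (unfold d; lra).
  set (K0 := 1 + B * PI). assert (HK0 : 1 <= K0) by (unfold K0; nra).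
  set (C1 := PI * (B + 2*K0 + 2*K0/d) + 2*K0/d).
  assert (HC1 : 0 < C1).
  { unfold C1. assert (0 < 2*K0/d) by (apply Rdiv_lt_0_compat; lra). nra. }
  exists (8 * C1 * exp ((1+B)*PI/2)). split.
  { assert (0 < exp ((1+B)*PI/2)) by apply exp_pos. nra. }
  intros p q n Hn u w u' w' Hu Hw Hu' Hw' Hder Hu0 Hw0 Hu'0 Hw'0 pr_re pr_im.
  set (al := csqrt_re p q) in *. set (be := csqrt_im p q) in *. set (r := cmod p q) in *.
  destruct (csqrt_props p q) as [Hs1 [Hs2 [Hs3 Hr]]]. fold al be r in Hs1, Hs2, Hs3, Hr.
  set (m := 1 + r).
  set (k := 1 + 2 * Rabs be + B).
  assert (Hbe0 : 0 <= Rabs be) by apply Rabs_pos.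
  assert (Hk : 0 <= k) by (unfold k; lra).
  set (U := fun x => u (cl x)). set (W := fun x => w (cl x)).
  set (U1 := fun x => u' (cl x)). set (W1 := fun x => w' (cl x)).
  assert (HUc : forall x, continuity_pt U x) by (apply cont_cl; auto).
  assert (HWc : forall x, continuity_pt W x) by (apply cont_cl; auto).
  assert (HU1c : forall x, continuity_pt U1 x) by (apply cont_cl; auto).
  assert (HW1c : forall x, continuity_pt W1 x) by (apply cont_cl; auto).
  assert (HUd : forall x, 0 < x < PI ->
     derivable_pt_lim U x (U1 x) /\ derivable_pt_lim W x (W1 x) /\
     derivable_pt_lim U1 x (V x * U x - (p * U x - q * W x)) /\
     derivable_pt_lim W1 x (V x * W x - (p * W x + q * U x))).
  { intros x Hx. destruct (Hder x Hx) as [H1 [H2 [H3 H4]]].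
    unfold U, W, U1, W1. rewrite !cl_id by lra.
    repeat split; eapply loc_deriv; eauto; intros y Hy; rewrite cl_id; auto. }
  assert (Hm1 : 1 <= m) by (unfold m; lra).
  assert (HXi : forall X, 0 <= X <= PI -> En m U W U1 W1 X <= m * exp (k*X)).
  { intros X HX.
    assert (H := sys_bound U W U1 W1 (fun x => V x * U x) (fun x => V x * W x) p q B 0 HUc HWc HU1c HW1c HUd).
    fold r m be k in H.
    assert (E0 : En m U W U1 W1 0 = m).
    { unfold En, U, W, U1, W1. rewrite cl_id by lra. rewrite Hu0, Hw0, Hu'0, Hw'0. ring. }
    rewrite E0 in H. replace (m * exp (k*X)) with ((m + 0 * X) * exp (k*X)) by ring.
    apply H; auto. intros x Hx.
    assert (H1 := lem2 (U1 x) (V x) (U x) B (HVb x Hx)).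
    assert (H2 := lem2 (W1 x) (V x) (W x) B (HVb x Hx)).
    assert (0 <= U x * U x + W x * W x) by nra.
    assert (B*(U x * U x + W x * W x) <= B*(m*(U x * U x + W x * W x))) by (apply Rmult_le_compat_l; nra).
    unfold En. rewrite Rmult_0_l, Rplus_0_r.
    replace (U1 x * (V x * U x) + W1 x * (V x * W x)) with (U1 x * V x * U x + W1 x * V x * W x) by ring.
    nra. }
  assert (HUW : forall x, 0 <= x <= PI -> U x * U x + W x * W x <= exp (k*x)).
  { intros x Hx. assert (H := HXi x Hx). unfold En in H.
    assert (0 <= U1 x * U1 x + W1 x * W1 x) by nra.
    assert (m * (U x * U x + W x * W x) <= m * exp (k*x)) by lra.
    apply (Rmult_le_reg_l m); lra. }
  set (FR := fun x => U x - ccos_re al be x). set (FI := fun x => W x - ccos_im al be x).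
  set (FR1 := fun x => U1 x - Crd al be x). set (FI1 := fun x => W1 x - Cid al be x).
  assert (HFRc : forall x, continuity_pt FR x).
  { intros x. unfold FR. apply (continuity_pt_minus U). auto. apply derivable_continuous_pt. exists (Crd al be x). apply d_Cr. }
  assert (HFIc : forall x, continuity_pt FI x).
  { intros x. unfold FI. apply (continuity_pt_minus W). auto. apply derivable_continuous_pt. exists (Cid al be x). apply d_Ci. }
  assert (HFR1c : forall x, continuity_pt FR1 x).
  { intros x. unfold FR1. apply (continuity_pt_minus U1). auto. apply derivable_continuous_pt. eexists. apply (d_Crd al be p q); auto. }
  assert (HFI1c : forall x, continuity_pt FI1 x).
  { intros x. unfold FI1. apply (continuity_pt_minus W1). auto. apply derivable_continuous_pt. eexists. apply (d_Cid al be p q); auto. }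
  assert (HFd : forall x, 0 < x < PI ->
     derivable_pt_lim FR x (FR1 x) /\ derivable_pt_lim FI x (FI1 x) /\
     derivable_pt_lim FR1 x (V x * U x - (p * FR x - q * FI x)) /\
     derivable_pt_lim FI1 x (V x * W x - (p * FI x + q * FR x))).
  { intros x Hx. destruct (HUd x Hx) as [H1 [H2 [H3 H4]]].
    repeat split.
    - eapply dpl_ext; [| | exact (derivable_pt_lim_minus _ _ _ _ _ H1 (d_Cr al be x))]; reflexivity.
    - eapply dpl_ext; [| | exact (derivable_pt_lim_minus _ _ _ _ _ H2 (d_Ci al be x))]; reflexivity.
    - eapply dpl_ext; [| | exact (derivable_pt_lim_minus _ _ _ _ _ H3 (d_Crd al be p q x Hs1 Hs2))]. reflexivity.
      unfold FR, FI. ring.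
    - eapply dpl_ext; [| | exact (derivable_pt_lim_minus _ _ _ _ _ H4 (d_Cid al be p q x Hs1 Hs2))]. reflexivity.
      unfold FR, FI. ring. }
  assert (HXF : forall X, 0 <= X <= PI -> En m FR FI FR1 FI1 X <= B * PI * exp (k*PI)).
  { intros X HX.
    assert (H := sys_bound FR FI FR1 FI1 (fun x => V x * U x) (fun x => V x * W x) p q B B HFRc HFIc HFR1c HFI1c HFd).
    fold r m be k in H.
    assert (E0 : En m FR FI FR1 FI1 0 = 0).
    { unfold En, FR, FI, FR1, FI1, U, W, U1, W1. rewrite cl_id by lra. rewrite Hu0, Hw0, Hu'0, Hw'0, Cr0, Ci0, Crd0, Cid0. ring. }
    rewrite E0 in H.
    eapply Rle_trans. apply H; auto.
    - intros x Hx.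
      assert (H1 := lem2 (FR1 x) (V x) (U x) B (HVb x Hx)).
      assert (H2 := lem2 (FI1 x) (V x) (W x) B (HVb x Hx)).
      assert (H3 := HUW x Hx).
      assert (0 <= FR x * FR x + FI x * FI x) by nra.
      assert (0 <= B*(m*(FR x * FR x + FI x * FI x))) by (apply Rmult_le_pos; nra).
      assert (B*(U x * U x + W x * W x) <= B*exp (k*x)) by (apply Rmult_le_compat_l; lra).
      unfold En.
      replace (FR1 x * (V x * U x) + FI1 x * (V x * W x)) with (FR1 x * V x * U x + FI1 x * V x * W x) by ring.
      nra.
    - assert (exp (k*X) <= exp (k*PI)).
      { destruct (Rle_lt_or_eq_dec (k*X) (k*PI)) as [Hl|He]. nra. apply Rlt_le, exp_increasing; auto. rewrite He; lra. }
      assert (0 <= B*X) by nra. assert (B * X <= B * PI) by nra. assert (0 < exp (k*X)) by apply exp_pos.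
      rewrite Rplus_0_l. nra. }
  set (sm := sqrt m). assert (Hsm2 : sm * sm = m) by (apply sqrt_sqrt; lra).
  assert (Hsm1 : 1 <= sm).
  { unfold sm. rewrite <- sqrt_1. apply sqrt_le_1_alt. lra. }
  set (Q := exp (k*PI/2)).
  assert (HQ2 : Q * Q = exp (k*PI)) by (unfold Q; rewrite <- exp_plus; f_equal; field).
  assert (HQ : 0 < Q) by apply exp_pos.
  assert (Hpr : Rabs p <= r /\ Rabs q <= r).
  { assert (Hrr : r * r = p^2 + q^2) by (unfold r, cmod; apply sqrt_sqrt; nra).
    split; apply sq_le; nra. }
  assert (Hexk : forall x, 0 <= x <= PI -> exp (k*x) <= exp (k*PI)).
  { intros x Hx. destruct (Rle_lt_or_eq_dec (k*x) (k*PI)) as [Hl|He]. nra. apply Rlt_le, exp_increasing; auto. rewrite He; lra. }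
  assert (HB1 : forall x, 0 <= x <= PI -> Rabs (U x) <= Q /\ Rabs (W x) <= Q /\
     sm * Rabs (FR x) <= K0 * Q /\ sm * Rabs (FI x) <= K0 * Q /\ Rabs (FR1 x) <= K0 * Q /\ Rabs (FI1 x) <= K0 * Q).
  { intros x Hx. assert (H1 := HUW x Hx). assert (H2 := HXF x Hx). assert (H3 := Hexk x Hx).
    unfold En in H2.
    assert (Hk0 : B * PI * exp (k*PI) <= (K0*Q)*(K0*Q)).
    { replace ((K0*Q)*(K0*Q)) with (K0*K0*(Q*Q)) by ring. rewrite HQ2.
      apply Rmult_le_compat_r. apply Rlt_le, exp_pos. unfold K0; nra. }
    assert (HK0Q : 0 <= K0 * Q) by nra.
    assert (0 <= FR1 x * FR1 x) by nra. assert (0 <= FI1 x * FI1 x) by nra.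
    assert (0 <= FR x * FR x) by nra. assert (0 <= FI x * FI x) by nra.
    assert (0 <= m * (FR x * FR x)) by nra. assert (0 <= m * (FI x * FI x)) by nra.
    assert (0 <= W x * W x) by nra. assert (0 <= U x * U x) by nra.
    repeat split.
    - apply sq_le; [lra| rewrite HQ2; lra].
    - apply sq_le; [lra| rewrite HQ2; lra].
    - rewrite <- (Rabs_right sm) by lra. rewrite <- Rabs_mult. apply sq_le; auto.
      replace (sm * FR x * (sm * FR x)) with ((sm*sm) * (FR x * FR x)) by ring. rewrite Hsm2. nra.
    - rewrite <- (Rabs_right sm) by lra. rewrite <- Rabs_mult. apply sq_le; auto.
      replace (sm * FI x * (sm * FI x)) with ((sm*sm) * (FI x * FI x)) by ring. rewrite Hsm2. nra.
    - apply sq_le; nra.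
    - apply sq_le; nra. }
  set (N := INR n).
  assert (HN : 1 <= N) by (unfold N; apply (le_INR 1 n) in Hn; simpl in Hn; lra).
  set (M1 := K0 * Q * sm). set (M2 := (B + 2*K0) * Q * sm).
  assert (HKQ : 0 <= K0 * Q) by nra.
  assert (HM1a : K0 * Q <= M1) by (unfold M1; nra).
  assert (Hfr2 : forall x, 0 <= x <= PI -> forall (X Y Z : R), Rabs X <= Q -> sm * Rabs Y <= K0 * Q -> sm * Rabs Z <= K0 * Q ->
            Rabs (V x * X - (p * Y - q * Z)) <= M2 /\ Rabs (V x * X - (p * Y + q * Z)) <= M2).
  { intros x Hx X Y Z H1 H2 H3.
    assert (HV1 := HVb x Hx).
    assert (Ha1 : Rabs (V x * X) <= B * Q).
    { rewrite Rabs_mult. apply Rmult_le_compat; auto using Rabs_pos. }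
    assert (Ha2 : Rabs (p * Y) <= sm * (K0 * Q)).
    { rewrite Rabs_mult. destruct Hpr as [Hp _].
      assert (Rabs p <= sm * sm) by (rewrite Hsm2; unfold m; lra).
      assert (0 <= Rabs Y) by apply Rabs_pos.
      apply Rle_trans with (sm * sm * Rabs Y). apply Rmult_le_compat_r; auto.
      rewrite Rmult_assoc. apply Rmult_le_compat_l; lra. }
    assert (Ha3 : Rabs (q * Z) <= sm * (K0 * Q)).
    { rewrite Rabs_mult. destruct Hpr as [_ Hq].
      assert (Rabs q <= sm * sm) by (rewrite Hsm2; unfold m; lra).
      assert (0 <= Rabs Z) by apply Rabs_pos.
      apply Rle_trans with (sm * sm * Rabs Z). apply Rmult_le_compat_r; auto.
      rewrite Rmult_assoc. apply Rmult_le_compat_l; lra. }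
    assert (B * Q <= B * Q * sm) by (rewrite <- (Rmult_1_r (B*Q)) at 1; apply Rmult_le_compat_l; nra).
    assert (Hsum : B * Q + sm * (K0 * Q) + sm * (K0 * Q) <= M2) by (unfold M2; nra).
    split.
    - unfold Rminus. eapply Rle_trans. apply Rabs_triang. rewrite Rabs_Ropp.
      eapply Rle_trans. apply Rplus_le_compat_l. apply Rabs_triang. rewrite Rabs_Ropp. lra.
    - unfold Rminus. eapply Rle_trans. apply Rabs_triang. rewrite Rabs_Ropp.
      eapply Rle_trans. apply Rplus_le_compat_l. apply Rabs_triang. lra. }
  assert (Hsm0 : 0 < sm) by lra.
  assert (HIr : Rabs (RiemannInt pr_re) <= (PI*(M2 + 2*M1/(PI-a)) + 2*M1/(PI-a)) / (N*N)).
  { rewrite <- RInt_Reals.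
    rewrite (RInt_ext _ (fun x => FR x * Rapi a x * cos (N*x))).
    2: { intros x Hx. rewrite Rmin_left, Rmax_right in Hx by lra. unfold FR, U, N. rewrite cl_id by lra. reflexivity. }
    apply (ibp_bound FR FR1 (fun x => V x * U x - (p * FR x - q * FI x))); auto.
    - intros x Hx. destruct (HFd x Hx) as [H1 [_ [H3 _]]]. auto.
    - intros x Hx. destruct (HB1 x Hx) as [H1 [H2 [H3 [H4 [H5 H6]]]]].
      destruct (Hfr2 x Hx (U x) (FR x) (FI x) H1 H3 H4) as [H7 _].
      repeat split; auto.
      + assert (Rabs (FR x) <= sm * Rabs (FR x)) by (assert (0 <= Rabs (FR x)) by apply Rabs_pos; nra). lra.
      + lra.
    - unfold FR, U. rewrite cl_id by lra. rewrite Hu0, Cr0. ring.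
    - unfold FR1, U1. rewrite cl_id by lra. rewrite Hu'0, Crd0. ring. }
  assert (HIi : Rabs (RiemannInt pr_im) <= (PI*(M2 + 2*M1/(PI-a)) + 2*M1/(PI-a)) / (N*N)).
  { rewrite <- RInt_Reals.
    rewrite (RInt_ext _ (fun x => FI x * Rapi a x * cos (N*x))).
    2: { intros x Hx. rewrite Rmin_left, Rmax_right in Hx by lra. unfold FI, W, N. rewrite cl_id by lra. reflexivity. }
    apply (ibp_bound FI FI1 (fun x => V x * W x - (p * FI x + q * FR x))); auto.
    - intros x Hx. destruct (HFd x Hx) as [_ [H2 [_ H4]]]. auto.
    - intros x Hx. destruct (HB1 x Hx) as [H1 [H2 [H3 [H4 [H5 H6]]]]].
      destruct (Hfr2 x Hx (W x) (FI x) (FR x) H2 H4 H3) as [_ H7].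
      repeat split; auto.
      + assert (Rabs (FI x) <= sm * Rabs (FI x)) by (assert (0 <= Rabs (FI x)) by apply Rabs_pos; nra). lra.
      + lra.
    - unfold FI, W. rewrite cl_id by lra. rewrite Hw0, Ci0. ring.
    - unfold FI1, W1. rewrite cl_id by lra. rewrite Hw'0, Cid0. ring. }
  assert (ET : (PI*(M2 + 2*M1/(PI-a)) + 2*M1/(PI-a)) / (N*N) = C1 * Q * sm / (N*N)).
  { unfold M1, M2, C1, d. field. split; lra. }
  rewrite ET in HIr, HIi.
  set (Ir := RiemannInt pr_re) in *. set (Ii := RiemannInt pr_im) in *.
  assert (Hsq : sqrt (Ir ^ 2 + Ii ^ 2) <= Rabs Ir + Rabs Ii).
  { assert (H0 : 0 <= Rabs Ir + Rabs Ii) by (assert (H := Rabs_pos Ir); assert (H' := Rabs_pos Ii); lra).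
    rewrite <- (sqrt_square (Rabs Ir + Rabs Ii)) by auto. apply sqrt_le_1_alt.
    assert (Rabs Ir * Rabs Ir = Ir * Ir) by (rewrite <- Rabs_mult; apply Rabs_right; nra).
    assert (Rabs Ii * Rabs Ii = Ii * Ii) by (rewrite <- Rabs_mult; apply Rabs_right; nra).
    assert (0 <= Rabs Ir * Rabs Ii) by (apply Rmult_le_pos; apply Rabs_pos). nra. }
  assert (HQe : Q = exp ((1+B)*PI/2) * exp (PI * Rabs be)).
  { unfold Q. rewrite <- exp_plus. f_equal. unfold k. field. }
  set (s := sqrt r).
  assert (Hs0 : 0 <= s) by apply sqrt_pos. assert (Hss : s * s = r) by (apply sqrt_sqrt; lra).
  set (G := 1 + (1 + r) / (1 + PI * s)).
  assert (HsG : sm <= 4 * G).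
  { assert (Hsm : sm <= 1 + s).
    { apply (Rle_trans _ (Rabs sm)). apply Rle_abs. apply sq_le. lra. rewrite Hsm2. unfold m. nra. }
    assert (Hps : 0 < 1 + PI * s) by nra.
    unfold G. assert (H : (1 + s) * (1 + PI * s) <= 4 * (1 + PI*s) + 4 * (1 + r)).
    { rewrite <- Hss. assert (PI*(s*s) <= 4*(s*s)) by (apply Rmult_le_compat_r; nra).
      assert (H3 := PI2_3_2). assert (s <= PI * s) by nra. nra. }
    assert (H2 : 4 * (1 + (1 + r) / (1 + PI * s)) = (4 * (1 + PI*s) + 4 * (1 + r)) / (1 + PI * s)) by (field; lra).
    rewrite H2. apply (Rle_trans _ (1 + s)); auto.
    apply (Rmult_le_reg_r (1 + PI * s)); auto. unfold Rdiv. rewrite Rmult_assoc, Rinv_l by lra. lra. }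
  assert (HZ : 0 < C1 * Q / (N*N)) by (apply Rdiv_lt_0_compat; nra).
  assert (ER : 8 * C1 * exp ((1 + B) * PI / 2) * exp (PI * Rabs be) / N ^ 2 * (1 + m / (1 + PI * s)) = 8 * G * (C1 * Q / (N*N))).
  { unfold G, m. rewrite HQe. field. split; nra. }
  rewrite ER.
  replace (C1 * Q * sm / (N*N)) with (sm * (C1 * Q / (N*N))) in HIr, HIi by (field; lra).
  eapply Rle_trans. exact Hsq.
  assert (sm * (C1 * Q / (N*N)) <= 4 * G * (C1 * Q / (N*N))) by (apply Rmult_le_compat_r; lra).
  lra.
Qed.
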